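(* Let $\mathcal{T}$ be a finite or countably infinite set and let $\mathbf{p} \ne \mathbf{q}$ be probability distributions on $\mathcal{T}$. Then there exists a strict total order $\prec^*$ on $\mathcal{T}$ such that the associated rank statistic $R$ is not uniformly distributed on $\{0,1\}$ for $m = 1$, and hence for every $m \ge 1$ the associated rank statistic is not uniformly distributed on $\{0,1,\dots,m\}$. Here, for a strict total order $\prec$ and a positive integer $m$, the associated rank statistic is $R = \sum_{j=1}^m \big(\mathbb{I}[X_j \prec X_0] + \mathbb{I}[X_j = X_0, U_j < U_0]\big)$, where $X_0 \sim \mathbf{q}$, $X_1,\dots,X_m \sim^{\mathrm{iid}} \mathbf{p}$, $U_0,\dots,U_m \sim^{\mathrm{iid}} \mathrm{Uniform}(0,1)$ are mutually independent.
   Context: $\mathbb{I}[\cdot]$ denotes the indicator of an event. *)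

(* Defs.v *)
From HB Require Import structures.
From mathcomp Require Import all_boot all_order all_algebra.
From mathcomp Require Import all_classical all_reals all_analysis.
Set Implicit Arguments. Unset Strict Implicit. Unset Printing Implicit Defensive.
Import Order.TTheory GRing.Theory Num.Theory.
Local Open Scope classical_set_scope.
Local Open Scope ring_scope.

Section Defs.
Context {R : realType} {T : countType}.

Definition is_prob_distr (p : T -> R) : Prop :=
  (forall t, 0 <= p t) /\ (\esum_(t in [set: T]) (p t)%:E = 1)%E.

Definition strict_total_order (lt : rel T) : Prop :=
  irreflexive lt /\ transitive lt /\ (forall x y, x != y -> lt x y || lt y x).

Definition rank_stat (lt : rel T) (m : nat) {Omega : Type}
    (X : nat -> Omega -> T) (U : nat -> Omega -> R) (w : Omega) : nat :=
  (\sum_(j < m) (lt (X j.+1 w) (X 0 w)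
                 + ((X j.+1 w == X 0 w) && (U j.+1 w < U 0 w)%R)))%N.

Definition rank_model (p q : T -> R) (m : nat) {d : measure_display}
    {Omega : measurableType d} (P : probability Omega R)
    (X : nat -> Omega -> T) (U : nat -> Omega -> R) : Prop :=
  (forall i t, (i <= m)%N -> measurable (X i @^-1` [set t])) /\
  (forall i, (i <= m)%N -> measurable_fun [set: Omega] (U i)) /\
  (forall t, P (X 0 @^-1` [set t]) = (q t)%:E) /\
  (forall i t, (1 <= i <= m)%N -> P (X i @^-1` [set t]) = (p t)%:E) /\
  (forall i (B : set R), (i <= m)%N -> measurable B ->
     P (U i @^-1` B) = (@lebesgue_measure R) (B `&` `[0%R, 1%R])) /\
  (forall (A : nat -> set T) (B : nat -> set R), (forall i, measurable (B i)) ->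
     P (\big[setI/setT]_(i < m.+1) (X i @^-1` A i `&` U i @^-1` B i)) =
     (\prod_(i < m.+1) (P (X i @^-1` A i) * P (U i @^-1` B i)))%E).

Definition rank_uniform (lt : rel T) (m : nat) {d : measure_display}
    {Omega : measurableType d} (P : probability Omega R)
    (X : nat -> Omega -> T) (U : nat -> Omega -> R) : Prop :=
  forall k, (k <= m)%N ->
    P [set w | rank_stat lt m X U w = k] = ((m.+1)%:R^-1 : R)%:E.

End Defs.

(* Main.v *)
Require Import Defs.
From HB Require Import structures.
From mathcomp Require Import all_boot all_order all_algebra.
From mathcomp Require Import all_classical all_reals all_analysis measurable_realfun.
From mathcomp Require Import ring lra.
Import Order.TTheory GRing.Theory Num.Theory.
Local Open Scope classical_set_scope.
Local Open Scope ring_scope.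
Section P1.
Context {R : realType} {T : countType}.

Definition ltS (S : pred T) : rel T :=
  fun x y => if S x == S y then (pickle x < pickle y)%N else S y.

Lemma ltS_sto S : strict_total_order (ltS S).
Proof.
split; [|split].
- by move=> x; rewrite /ltS eqxx ltnn.
- move=> y x z; rewrite /ltS.
  case Sx: (S x); case Sy: (S y); case Sz: (S z) => //=; exact: ltn_trans.
- move=> x y xy; rewrite /ltS eq_sym.
  have pxy : pickle x != pickle y by apply: contra xy => /eqP/(@pcan_inj _ _ _ _ (@pickleK T))->.
  by case Sx: (S x); case Sy: (S y) => //=; rewrite -neq_ltn.
Qed.

Lemma sum_if_eq (F : seq T) (h : T -> R) a : uniq F -> a \in F ->
  \sum_(b <- F) (if b == a then h b else 0) = h a.
Proof.
move=> uF aF; rewrite (bigD1_seq a) //= eqxx big1 ?addr0 // => b /negPf -> //.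
Qed.

Lemma sq_identity (l : rel T) (hl : strict_total_order l) (F : seq T) (x : T -> R) :
  uniq F ->
  \sum_(a <- F) \sum_(b <- F) (if l a b then x a * x b else 0) =
  ((\sum_(a <- F) x a)^+2 - \sum_(a <- F) x a ^+ 2) / 2.
Proof.
move=> uF; case: hl => irr [tr tot].
set A := (X in X = _).
have AB : A = \sum_(a <- F) \sum_(b <- F) (if l b a then x a * x b else 0).
  rewrite /A exchange_big /=; apply: eq_bigr => a _; apply: eq_bigr => b _.
  by case: ifP => // _; rewrite mulrC.
have E : (\sum_(a <- F) x a)^+2 = A + A + \sum_(a <- F) x a ^+ 2.
  rewrite {2}AB /A -!big_split /= expr2 big_distrlr /=.
  rewrite big_seq [RHS]big_seq; apply: eq_bigr => a aF.
  rewrite [x a ^+ 2]expr2 -(sum_if_eq F (fun b => x a * x b) a uF aF) -!big_split /=.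
  apply: eq_bigr => b _.
  case: (eqVneq b a) => [->|ba].
    by rewrite irr !add0r.
  have ab : a != b by rewrite eq_sym.
  case/orP: (tot a b ab) => h.
    have -> : l b a = false by apply/negP => h'; move: (tr _ _ _ h h'); rewrite irr.
    by rewrite h !addr0.
  have -> : l a b = false by apply/negP => h'; move: (tr _ _ _ h h'); rewrite irr.
  by rewrite h add0r addr0.
by rewrite E; field.
Qed.

End P1.
Section P1b.
Context {R : realType} {T : countType}.

Lemma key_ineq (S : pred T) (F : seq T) (p q : T -> R) tt :
  uniq F -> tt \in F -> ~~ S tt ->
  (forall x, 0 <= p x) ->
  (forall x, S x -> p x <= q x) -> (forall x, ~~ S x -> q x <= p x) ->
  (\sum_(a <- F) p a)^+2/2
    + (\sum_(a <- F | ~~ S a) p a) * (\sum_(a <- F) q a - \sum_(a <- F) p a)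
    + p tt * (p tt - q tt) / 2
  <= (\sum_(a <- F) \sum_(b <- F) (if ltS S a b then p a * q b else 0))
     + (\sum_(a <- F) p a * q a) / 2.
Proof.
move=> uF tF nSt p0 Sle nSle.
set pL := \sum_(a <- F | ~~ S a) p a.
pose D := fun b => q b - p b.
pose H := fun b => \sum_(a <- F) (if ltS S a b then p a else 0) + p b / 2.
have h1 : \sum_(a <- F) \sum_(b <- F) (if ltS S a b then p a * q b else 0) =
  \sum_(a <- F) \sum_(b <- F) (if ltS S a b then p a * p b else 0) +
  \sum_(b <- F) (\sum_(a <- F) (if ltS S a b then p a else 0)) * D b.
  under [X in _ = _ + X]eq_bigr do rewrite mulr_suml.
  rewrite [X in _ = _ + X]exchange_big -big_split /=; apply: eq_bigr => a _.
  rewrite -big_split /=; apply: eq_bigr => b _.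
  by case: ifP => _; rewrite /D; [ring | rewrite mul0r addr0].
have h2 : \sum_(a <- F) p a * q a =
   \sum_(a <- F) p a ^+ 2 + \sum_(a <- F) p a * D a.
  rewrite -big_split /=; apply: eq_bigr => a _; rewrite /D; ring.
have h3 : \sum_(b <- F) D b * H b =
  \sum_(b <- F) (\sum_(a <- F) (if ltS S a b then p a else 0)) * D b +
  (\sum_(a <- F) p a * D a) / 2.
  rewrite mulr_suml -big_split /=; apply: eq_bigr => b _; rewrite /H; ring.
have hid := @sq_identity R T (ltS S) (ltS_sto S) F p uF.
have eqRHS : (\sum_(a <- F) \sum_(b <- F) (if ltS S a b then p a * q b else 0))
     + (\sum_(a <- F) p a * q a) / 2 =
     (\sum_(a <- F) p a)^+2/2 + \sum_(b <- F) D b * H b.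
  by rewrite h1 h2 h3 hid; field.
rewrite eqRHS.
have hb : forall b, b \in F -> D b * pL + `|D b| * p b / 2 <= D b * H b.
  move=> b bF; case Sb: (S b).
  - have Hge : pL + p b / 2 <= H b.
      rewrite /H lerD2r /pL big_mkcond /=; apply: ler_sum => a _.
      case: ifP => nSa.
        by rewrite /ltS (negbTE nSa); move: Sb; rewrite /= => ->.
      by case: ifP.
    have D0 : 0 <= D b by rewrite /D subr_ge0 Sle.
    rewrite ger0_norm //; nra.
  - have Hle : H b <= pL - p b / 2.
      suff : \sum_(a <- F) (if ltS S a b then p a else 0) <= pL - p b.
        rewrite /H; lra.
      have pLe : pL = p b + \sum_(a <- F | a != b) (if ~~ S a then p a else 0).
        rewrite /pL big_mkcond /= (bigD1_seq b) //=.
        by move: (Sb); rewrite /= => ->.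
      rewrite pLe addrAC subrr add0r.
      rewrite (bigD1_seq b) //= (proj1 (ltS_sto S)) add0r.
      apply: ler_sum => a _; rewrite /ltS; move: (Sb); rewrite /= => ->.
      by case: (S a) => //=; case: ifP.
    have D0 : D b <= 0 by rewrite /D subr_le0 nSle // Sb.
    rewrite ler0_norm //; nra.
have hsum : \sum_(b <- F) (D b * pL + `|D b| * p b / 2) <= \sum_(b <- F) D b * H b.
  by rewrite big_seq [X in _ <= X]big_seq; apply: ler_sum.
have hs1 : \sum_(b <- F) (D b * pL + `|D b| * p b / 2) =
   pL * (\sum_(a <- F) q a - \sum_(a <- F) p a) + (\sum_(b <- F) `|D b| * p b) / 2.
  rewrite big_split /= -mulr_suml -sumrB mulrC; congr (_ + _).
  by rewrite mulr_suml.
have hs2 : `|D tt| * p tt <= \sum_(b <- F) `|D b| * p b.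
  rewrite (bigD1_seq tt) //= lerDl; apply: sumr_ge0 => b _.
  exact: mulr_ge0.
have hDt : `|D tt| = p tt - q tt.
  by rewrite ler0_norm ?opprB // /D subr_le0 nSle.
rewrite hs1 hDt in hsum hs2.
have : (\sum_(a <- F) p a)^+2/2 + (pL * (\sum_(a <- F) q a - \sum_(a <- F) p a)
   + (p tt - q tt) * p tt / 2) <= (\sum_(a <- F) p a)^+2/2 + \sum_(b <- F) D b * H b.
  rewrite lerD2l; apply: le_trans hsum; rewrite lerD2l.
  by rewrite ler_pM2r // invr_gt0 ltr0n.
by rewrite [(p tt - q tt) * p tt]mulrC addrA.
Qed.

End P1b.
Section P2.
Context {R : realType} {T : countType}.

Lemma psum_le1 (p : T -> R) : is_prob_distr p ->
  forall s, uniq s -> \sum_(t <- s) p t <= 1.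
Proof.
move=> [p0 p1] s us.
have : ((\sum_(t <- s) p t)%:E <= \esum_(t in [set: T]) (p t)%:E)%E.
  apply: esum_ge; exists [set` s].
    by split; [exact: finite_seq|].
  by rewrite -sumEFin fsbig_seq.
by rewrite p1 lee_fin.
Qed.

Arguments psum_le1 {p}.

Lemma psum_ge (p : T -> R) : is_prob_distr p ->
  forall e, 0 < e -> exists s, uniq s /\ 1 - e < \sum_(t <- s) p t.
Proof.
move=> [p0 p1] e e0.
have : ((1 - e)%:E < \esum_(t in [set: T]) (p t)%:E)%E.
  by rewrite p1 lte_fin ltrBlDr ltrDl.
case/ereal_sup_gt => _ [X [finX _] <-].
rewrite fsbig_finite // sumEFin lte_fin => h.
by exists (finmap.enum_fset (fset_set X)); split => //; exact: finmap.fset_uniq.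
Qed.

Arguments psum_ge {p}.

Lemma sum_sub (s F : seq T) (h : T -> R) : uniq s -> uniq F ->
  {subset s <= F} -> (forall x, 0 <= h x) ->
  \sum_(t <- s) h t <= \sum_(t <- F) h t.
Proof.
move=> us uF sF h0.
rewrite [X in _ <= X](bigID (fun t => t \in s)) /=.
have -> : \sum_(t <- F | t \in s) h t = \sum_(t <- s) h t.
  rewrite -big_filter; apply: perm_big; apply: uniq_perm.
  - exact: filter_uniq.
  - exact: us.
  - by move=> x; rewrite mem_filter; case xs: (x \in s) => //=; rewrite sF.
by rewrite lerDl; apply: sumr_ge0.
Qed.

Lemma le_one (p : T -> R) : is_prob_distr p -> forall t, p t <= 1.
Proof.
move=> hp t; have := psum_le1 hp [:: t] isT.
by rewrite big_cons big_nil addr0.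
Qed.

Lemma exists_gt (p q : T -> R) : is_prob_distr p -> is_prob_distr q -> p <> q ->
  exists tt, q tt < p tt.
Proof.
move=> hp hq npq.
apply/not_existsP => hn.
have hle : forall t, p t <= q t by move=> t; rewrite leNgt; apply/negP => /(hn t).
have [t0 lt0] : exists t0, p t0 < q t0.
  apply/not_existsP => hn'; apply: npq; apply/funext => t.
  by apply/eqP; rewrite eq_le hle /= leNgt; apply/negP => /(hn' t).
have [s [us hs]] : exists s, uniq s /\ 1 - (q t0 - p t0) < \sum_(t <- s) p t.
  by apply: psum_ge => //; rewrite subr_gt0.
pose F := undup (t0 :: s).
have uF : uniq F by exact: undup_uniq.
have h1 : \sum_(t <- s) p t <= \sum_(t <- F) p t.
  apply: sum_sub => //; last by case: hp.
  by move=> x xs; rewrite mem_undup inE xs orbT.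
have h2 : \sum_(t <- F) p t + (q t0 - p t0) <= \sum_(t <- F) q t.
  have t0F : t0 \in F by rewrite mem_undup inE eqxx.
  rewrite (bigD1_seq t0) //= [X in _ <= X](bigD1_seq t0) //=.
  have : \sum_(i <- F | i != t0) p i <= \sum_(i <- F | i != t0) q i.
    by apply: ler_sum => i _; exact: hle.
  lra.
have h3 := psum_le1 hq F uF.
clear npq hn; lra.
Qed.

End P2.
Section P3.
Context {R : realType} {T : countType}.

Lemma choose_Fn (p q : T -> R) : is_prob_distr p -> is_prob_distr q -> p <> q ->
  exists F : seq T, exists n : nat, uniq F /\ (0 < n)%N /\
   1/2 < (\sum_(a <- F) \sum_(b <- F)
            (if ltS (fun x => p x < q x) a b then p a * q b else 0))
         + (\sum_(a <- F) p a * q a) * (1/2 - 1/(2 * n%:R)).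
Proof.
move=> hp hq npq.
have [tt htt] := exists_gt p q hp hq npq.
have p0 : forall x, 0 <= p x by case: hp.
have q0 : forall x, 0 <= q x by case: hq.
have p1 := le_one p hp; have q1 := le_one q hq.
pose c := p tt * (p tt - q tt) / 2.
have c0 : 0 < c.
  rewrite /c divr_gt0 // mulr_gt0 ?subr_gt0 //.
  exact: le_lt_trans (q0 tt) htt.
have c1 : c <= 1/2.
  have := p1 tt; have := q0 tt; have := p0 tt; rewrite /c; nra.
pose e := c / 4.
have e0 : 0 < e by rewrite /e divr_gt0.
have [s1 [us1 hs1]] := psum_ge p hp _ e0.
have [s2 [us2 hs2]] := psum_ge q hq _ e0.
pose F := undup (tt :: s1 ++ s2).
have uF : uniq F by exact: undup_uniq.
have tF : tt \in F by rewrite mem_undup inE eqxx.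
have hpF : 1 - e < \sum_(t <- F) p t.
  apply: (lt_le_trans hs1); apply: sum_sub => // x xs.
  by rewrite mem_undup inE mem_cat xs orbT.
have hqF : 1 - e < \sum_(t <- F) q t.
  apply: (lt_le_trans hs2); apply: sum_sub => // x xs.
  by rewrite mem_undup inE mem_cat xs !orbT.
have hpF1 := psum_le1 p hp F uF.
have hqF1 := psum_le1 q hq F uF.
pose S := fun x => p x < q x.
have nSt : ~~ S tt by rewrite /S -leNgt ltW.
have Sle : forall x, S x -> p x <= q x by move=> x /ltW.
have nSle : forall x, ~~ S x -> q x <= p x by move=> x; rewrite /S -leNgt.
have K := @key_ineq _ _ S F p q tt uF tF nSt p0 Sle nSle.
pose N := Num.bound (2 / c).
have hN := archi_boundP (ltW (divr_gt0 (ltr0n _ 2) c0) : 0 <= 2 / c).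
exists F, N.+1; split => //; split => //.
set W := \sum_(a <- F) \sum_(b <- F) _ in K *.
set spq := \sum_(a <- F) p a * q a in K *.
set sp := \sum_(t <- F) p t in K hpF hpF1 *.
set sq := \sum_(t <- F) q t in K hqF hqF1 *.
set pL := \sum_(a <- F | ~~ S a) p a in K.
have pL0 : 0 <= pL by apply: sumr_ge0.
have pL1 : pL <= sp.
  rewrite /pL /sp big_mkcond /=; apply: ler_sum => a _; by case: ifP.
have spq0 : 0 <= spq by apply: sumr_ge0 => a _; exact: mulr_ge0.
have spq1 : spq <= sp.
  by apply: ler_sum => a _; rewrite -[X in _ <= X]mulr1 ler_wpM2l.
have hn : 1 / (2 * (N.+1)%:R) <= c / 4.
  have Npos : 0 < (N.+1)%:R :> R by rewrite ltr0n.
  have : 2 / c < (N.+1)%:R.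
    apply: lt_le_trans hN _; rewrite ler_nat; exact: leqnSn.
  rewrite ltr_pdivrMr // => h.
  rewrite ler_pdivrMr ?mulr_gt0 //.
  move: h; set M := (N.+1)%:R; nra.
have hsq : 1 - 2 * e <= sp ^+ 2.
  have e1 : e <= 1 by rewrite /e; lra.
  nra.
have hpl : - e <= pL * (sq - sp) by nra.
have hspq : spq * (1 / (2 * (N.+1)%:R)) <= c / 4.
  apply: le_trans (_ : 1 * (c / 4) <= _); last by rewrite mul1r.
  apply: (ler_pM spq0 _ _ hn).
    by rewrite divr_ge0 // ltW // mulr_gt0 // ltr0n.
  exact: le_trans spq1 hpF1.
move: K hsq hpl hspq; rewrite -/c /e.
set r := 1 / (2 * (N.+1)%:R).
move=> K hsq hpl hspq; rewrite mulrBr.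
lra.
Qed.

End P3.
Section P4.
Context {R : realType} {d : measure_display} {Omega : measurableType d}
  (P : probability Omega R).

Definition good (h : Omega -> R) :=
  measurable_fun setT h /\ forall w, 0 <= h w.

Definition Ef (h : Omega -> R) : \bar R := (\int[P]_(w in setT) (h w)%:E)%E.

Lemma good_indic (A : set Omega) : measurable A -> good (\1_A).
Proof. by move=> mA; split; [exact: measurable_indic | move=> w; rewrite indicE]. Qed.

Lemma good_add h1 h2 : good h1 -> good h2 -> good (fun w => h1 w + h2 w).
Proof.
move=> [m1 p1] [m2 p2]; split; first exact: measurable_funD.
by move=> w; apply: addr_ge0.
Qed.

Lemma good_sum (I : Type) (s : seq I) (h : I -> Omega -> R) :
  (forall i, good (h i)) -> good (fun w => \sum_(i <- s) h i w).
Proof.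
move=> gh; split.
  by apply: measurable_sum => i; case: (gh i).
by move=> w; apply: sumr_ge0 => i _; case: (gh i).
Qed.

Lemma good_if (c : bool) h : good h -> good (fun w => if c then h w else 0).
Proof.
case: c => // _; split => //; exact: measurable_cst.
Qed.

Lemma good_EFin h : good h -> measurable_fun setT (fun w => (h w)%:E).
Proof. by case=> mh _; apply/measurable_EFinP. Qed.

Lemma Ef_add h1 h2 : good h1 -> good h2 ->
  Ef (fun w => h1 w + h2 w) = (Ef h1 + Ef h2)%E.
Proof.
move=> g1 g2; rewrite /Ef.
under eq_integral do rewrite EFinD.
have f10 : forall w, [set: Omega] w -> (0 <= (h1 w)%:E)%E.
  by move=> w _; rewrite lee_fin; case: g1.
have f20 : forall w, [set: Omega] w -> (0 <= (h2 w)%:E)%E.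
  by move=> w _; rewrite lee_fin; case: g2.
exact: (ge0_integralD P measurableT f10 (good_EFin _ g1) f20 (good_EFin _ g2)).
Qed.

Lemma Ef_sum (I : Type) (s : seq I) (h : I -> Omega -> R) :
  (forall i, good (h i)) ->
  Ef (fun w => \sum_(i <- s) h i w) = (\sum_(i <- s) Ef (h i))%E.
Proof.
move=> gh; rewrite /Ef.
under eq_integral do rewrite -sumEFin.
apply: ge0_integral_sum => //.
- by move=> i; apply: good_EFin.
- by move=> i w _; rewrite lee_fin; case: (gh i).
Qed.

Lemma Ef_if (c : bool) h : Ef (fun w => if c then h w else 0) = if c then Ef h else 0%E.
Proof.
case: c => //; rewrite /Ef; exact: integral0.
Qed.

Lemma Ef_indic (A : set Omega) : measurable A -> Ef (\1_A) = P A.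
Proof. by move=> mA; rewrite /Ef integral_indic // setIT. Qed.

Lemma Ef_le h1 h2 : good h1 -> good h2 -> (forall w, h1 w <= h2 w) ->
  (Ef h1 <= Ef h2)%E.
Proof.
move=> g1 g2 le12.
apply: (ge0_le_integral _ measurableT _ (good_EFin _ g1) (good_EFin _ g2)).
- by move=> w _; rewrite lee_fin; case: g1.
- by move=> w _; rewrite lee_fin.
Qed.

Lemma Ef_scale_indic (k : R) (A : set Omega) : 0 <= k -> measurable A ->
  Ef (fun w => k * \1_A w) = (k%:E * P A)%E.
Proof.
move=> k0 mA; rewrite /Ef.
under eq_integral do rewrite EFinM.
rewrite (ge0_integralZl_EFin _ measurableT _ _ k0).
- by rewrite integral_indic // setIT.
- by move=> w _; rewrite lee_fin indicE.
- by apply/measurable_EFinP; exact: measurable_indic.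
Qed.

End P4.
Section P5.
Context {R : realType} {T : countType} {d : measure_display}
  {Omega : measurableType d} (P : probability Omega R) (p q : T -> R) (m : nat)
  (X : nat -> Omega -> T) (U : nat -> Omega -> R)
  (hM : rank_model p q m P X U).

Definition Af (j : nat) (A0 A1 : set T) (i : nat) : set T :=
  if i == 0%N then A0 else if i == j.+1 then A1 else setT.
Definition Bf (j : nat) (B0 B1 : set R) (i : nat) : set R :=
  if i == 0%N then B0 else if i == j.+1 then B1 else setT.
Definition rect j A0 A1 B0 B1 : set Omega :=
  \big[setI/setT]_(i < m.+1) (X i @^-1` Af j A0 A1 i `&` U i @^-1` Bf j B0 B1 i).

Lemma bigI_mem n (F : 'I_n -> set Omega) w i :
  (\big[setI/setT]_(i < n) F i) w -> F i w.
Proof. by rewrite (bigD1 i) //= => -[]. Qed.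

Lemma rect_mem j A0 A1 B0 B1 w : (j < m)%N -> rect j A0 A1 B0 B1 w ->
  A0 (X 0%N w) /\ B0 (U 0%N w) /\ A1 (X j.+1 w) /\ B1 (U j.+1 w).
Proof.
move=> jm hw.
have jm1 : (j.+1 < m.+1)%N by [].
move: hw; rewrite /rect => hw.
have := bigI_mem _ _ _ ord0 hw; have := bigI_mem _ _ _ (Ordinal jm1) hw.
rewrite /Af /Bf /= eqxx => -[h1 h2] [h3 h4].
by split.
Qed.

Lemma mXpre i A : (i <= m)%N -> measurable (X i @^-1` A).
Proof.
case: hM => mX _ hi.
have -> : X i @^-1` A = \bigcup_(t : T) (if pselect (A t) then X i @^-1` [set t] else set0).
  apply/seteqP; split => w /=.
    by move=> Aw; exists (X i w) => //; case: (pselect (A (X i w))).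
  by move=> [t _]; case: (pselect (A t)) => // At ->.
apply: countable_bigcupT_measurable; first exact: countableP.
move=> t; case: (pselect (A t)) => At. exact: mX. exact: measurable0.
Qed.

Lemma mUpre i B : (i <= m)%N -> measurable B -> measurable (U i @^-1` B).
Proof.
case: hM => _ [mU _] hi mB.
by rewrite -[X in measurable X]setTI; apply: (mU i hi) => //.
Qed.

Lemma Bf_meas j B0 B1 i : measurable B0 -> measurable B1 -> measurable (Bf j B0 B1 i).
Proof. by move=> m0 m1; rewrite /Bf; case: ifP => _ //; case: ifP. Qed.

Lemma rect_meas j A0 A1 B0 B1 : measurable B0 -> measurable B1 ->
  measurable (rect j A0 A1 B0 B1).
Proof.
move=> m0 m1; apply: bigsetI_measurable => i _.
have hi : (i <= m)%N by rewrite -ltnS.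
apply: measurableI; first exact: mXpre.
by apply: mUpre => //; exact: Bf_meas.
Qed.

Lemma rect_prob j A0 A1 B0 B1 : (j < m)%N -> measurable B0 -> measurable B1 ->
  P (rect j A0 A1 B0 B1) =
  (P (X 0%N @^-1` A0) * P (U 0%N @^-1` B0) *
   (P (X j.+1 @^-1` A1) * P (U j.+1 @^-1` B1)))%E.
Proof.
move=> jm m0 m1.
case: hM => _ [_ [_ [_ [_ indep]]]].
have jm1 : (j.+1 < m.+1)%N by [].
rewrite /rect indep; last by move=> i; exact: Bf_meas.
rewrite (bigD1 ord0) //= (bigD1 (Ordinal jm1)) //= big1 ?mule1.
  by rewrite /Af /Bf /= eqxx.
move=> i /andP [i0 ij].
have hi0 : (nat_of_ord i == 0%N) = false.
  by apply: negbTE; move: i0; apply: contra => /eqP h; apply/eqP/val_inj.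
have hij : (nat_of_ord i == j.+1) = false.
  by apply: negbTE; move: ij; apply: contra => /eqP h; apply/eqP/val_inj.
by rewrite /Af /Bf hi0 hij !preimage_setT probability_setT mule1.
Qed.

End P5.
Section P6.
Context {R : realType} {T : countType} {d : measure_display}
  {Omega : measurableType d} (P : probability Omega R) (p q : T -> R) (m : nat)
  (X : nat -> Omega -> T) (U : nat -> Omega -> R)
  (hM : rank_model p q m P X U).

Lemma PX0 a : P (X 0%N @^-1` [set a]) = (q a)%:E.
Proof. by case: hM => _ [_ [h _]]. Qed.

Lemma PXj j a : (j < m)%N -> P (X j.+1 @^-1` [set a]) = (p a)%:E.
Proof. by move=> jm; case: hM => _ [_ [_ [h _]]]; apply: h. Qed.

Lemma PUT i : P (U i @^-1` setT) = 1%E.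
Proof. by rewrite preimage_setT probability_setT. Qed.

Lemma PU_co i x y : (i <= m)%N -> 0 <= x -> x < y -> y <= 1 ->
  P (U i @^-1` [set` `[x, y[]) = (y - x)%:E.
Proof.
move=> im x0 xy y1; case: hM => _ [_ [_ [_ [h _]]]].
rewrite (h i _ im (measurable_itv _)).
rewrite setIidl; last first.
  move=> z /=; rewrite !in_itv /= => /andP [xz zy].
  by rewrite (le_trans x0 xz) /= (le_trans (ltW zy) y1).
by rewrite lebesgue_measure_itv /= lte_fin xy EFinB.
Qed.

Lemma PU_cc i x : (i <= m)%N -> 0 <= x -> x <= 1 ->
  P (U i @^-1` [set` `[x, 1]]) = (1 - x)%:E.
Proof.
move=> im x0 x1; case: hM => _ [_ [_ [_ [h _]]]].
rewrite (h i _ im (measurable_itv _)).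
rewrite setIidl; last first.
  move=> z /=; rewrite !in_itv /= => /andP [xz z1].
  by rewrite (le_trans x0 xz) /= z1.
rewrite lebesgue_measure_itv /= lte_fin.
case: ltP => h1.
  by rewrite EFinD.
have -> : x = 1 by apply/eqP; rewrite eq_le x1.
by rewrite subrr.
Qed.

End P6.

Section P7.
Context {R : realType}.

Lemma sum_excl n (c : 'I_n -> bool) :
  (forall k k', c k -> c k' -> k = k') -> \sum_(k < n) (c k)%:R <= 1 :> R.
Proof.
move=> ex; case: (pickP c) => [k ck | none].
  rewrite (bigD1 k) //= ck big1 ?addr0 // => i ik.
  case ci: (c i) => //; by rewrite (ex _ _ ci ck) eqxx in ik.
by rewrite big1 // => i _; rewrite none.
Qed.

End P7.
Section P6c.
Context {R : realType}.
Lemma tri n : \sum_(k < n) (k%:R : R) = n%:R * (n%:R - 1) / 2.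
Proof.
elim: n => [|n IH]; first by rewrite big_ord0 mul0r mul0r.
by rewrite big_ord_recr /= IH -[n.+1]addn1 natrD; field.
Qed.
Lemma tie_term (N x : R) : N != 0 ->
  (1 - (x + 1) / N) * ((x + 1) / N - x / N) = 1 / N - (x / (N * N) + 1 / (N * N)).
Proof. by move=> N0; field. Qed.
Lemma tie_sum n : (0 < n)%N ->
  \sum_(k < n) ((1 - k.+1%:R / n%:R) * (k.+1%:R / n%:R - k%:R / n%:R))
  = 1/2 - 1/(2 * n%:R) :> R.
Proof.
move=> n0.
have N0 : (n%:R : R) != 0 by rewrite pnatr_eq0 -lt0n.
have e : forall k : 'I_n, (1 - k.+1%:R / n%:R) * (k.+1%:R / n%:R - k%:R / n%:R)
   = 1 / n%:R - (k%:R / (n%:R * n%:R) + 1 / (n%:R * n%:R)) :> R.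
  by move=> k; rewrite -natr1 tie_term.
under eq_bigr do rewrite e.
rewrite sumrB big_split /= -!mulr_suml tri !sumr_const card_ord.
move: N0; set N := (n%:R : R) => N0.
by field.
Qed.
End P6c.
Section P8.
Context {R : realType} {T : countType} {d : measure_display}
  {Omega : measurableType d} (P : probability Omega R) (p q : T -> R) (m : nat)
  (X : nat -> Omega -> T) (U : nat -> Omega -> R)
  (hM : rank_model p q m P X U) (lt : rel T) (F : seq T) (n : nat).

Definition I1 (k : nat) : interval R := `[k%:R / n%:R, k.+1%:R / n%:R[.
Definition I0 (k : nat) : interval R := `[k.+1%:R / n%:R, 1].

Definition gA j w : R := \sum_(a <- F) \sum_(b <- F)
  (if lt a b then \1_(rect m X U j [set b] [set a] setT setT) w else 0).
Definition gB j w : R := \sum_(a <- F) \sum_(k < n)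
  \1_(rect m X U j [set a] [set a] [set` I0 k] [set` I1 k]) w.

Lemma sum_if_le (x : T) (h : T -> R) : uniq F -> (forall b, 0 <= h b) ->
  \sum_(b <- F) (if b == x then h b else 0) <= h x.
Proof.
move=> uF h0; case xF: (x \in F).
  by rewrite sum_if_eq.
rewrite big1_seq // => b /andP [_ bF]; case: eqP => // bx.
by rewrite -bx bF in xF.
Qed.

Lemma indic_le (A : set Omega) w (c : R) : 0 <= c -> (A w -> 1 <= c) -> \1_A w <= c.
Proof.
move=> c0 h; rewrite indicE; case: (boolP (w \in A)) => [/set_mem Aw|_] //=.
exact: h.
Qed.

Lemma sum_le0 (I : Type) (s : seq I) (f : I -> R) : (forall i, f i <= 0) ->
  \sum_(i <- s) f i <= 0.
Proof.
move=> h; rewrite -oppr_ge0 -sumrN; apply: sumr_ge0 => i _; rewrite oppr_ge0; exact: h.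
Qed.

Lemma gA_le j w : (j < m)%N -> uniq F ->
  gA j w <= (lt (X j.+1 w) (X 0%N w))%:R.
Proof.
move=> jm uF.
set x1 := X j.+1 w; set x0 := X 0%N w.
apply: (@le_trans _ _ (\sum_(a <- F)
   (if a == x1 then \sum_(b <- F) (if b == x0 then (lt a b)%:R else 0) else 0))).
  apply: ler_sum => a _; case: eqP => [ea|na].
    apply: ler_sum => b _; case: ifP => lab; last by case: ifP.
    apply: indic_le; first by case: ifP.
    move=> /(@rect_mem _ _ _ _ m X U j _ _ _ _ w jm) [h0 [_ [h1 _]]].
    by rewrite /x0 h0 eqxx.
  apply: sum_le0 => b; case: ifP => // lab.
  apply: indic_le => // /(@rect_mem _ _ _ _ m X U j _ _ _ _ w jm) [_ [_ [h1 _]]].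
  by exfalso; apply: na; rewrite /x1 h1.
apply: (@le_trans _ _ (\sum_(a <- F) (if a == x1 then (lt a x0)%:R else 0))).
  apply: ler_sum => a _; case: ifP => // _.
  by apply: sum_if_le => // b.
by apply: sum_if_le => // b.
Qed.

Lemma gB_le j w : (j < m)%N -> uniq F -> (0 < n)%N ->
  gB j w <= ((X j.+1 w == X 0%N w) && (U j.+1 w < U 0%N w))%:R.
Proof.
move=> jm uF n0.
set x1 := X j.+1 w; set x0 := X 0%N w; set u1 := U j.+1 w; set u0 := U 0%N w.
pose c (k : 'I_n) := [&& x1 == x0, u1 \in I1 k & u0 \in I0 k].
apply: (@le_trans _ _ (\sum_(a <- F) (if a == x1 then \sum_(k < n) (c k)%:R else 0))).
  apply: ler_sum => a _; case: eqP => [ea|na].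
    apply: ler_sum => k _.
    apply: indic_le; first by case: (c k).
    move=> /(@rect_mem _ _ _ _ m X U j _ _ _ _ w jm) [h0 [h2 [h1 h3]]].
    have -> : c k = true.
      by rewrite /c /x1 /x0 h0 h1 eqxx /=; apply/andP; split.
    by [].
  apply: sum_le0 => k.
  apply: indic_le => // /(@rect_mem _ _ _ _ m X U j _ _ _ _ w jm) [_ [_ [h1 _]]].
  by exfalso; apply: na; rewrite /x1 h1.
apply: (@le_trans _ _ (\sum_(k < n) (c k)%:R)).
  apply: (@sum_if_le x1 (fun _ => \sum_(k < n) (c k)%:R)) => // b.
  by apply: sumr_ge0.
have N0 : (0 : R) < n%:R by rewrite ltr0n.
have Ni : (0 : R) < n%:R^-1 by rewrite invr_gt0.
have cu : forall k, c k -> u1 < u0.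
  move=> k /and3P [_]; rewrite /I1 /I0 !in_itv /= => /andP [_ h1] /andP [h2 _].
  exact: lt_le_trans h1 h2.
case E : ((x1 == x0) && (u1 < u0)).
  apply: sum_excl => k k' ck ck'; apply: val_inj => /=.
  move: ck ck' => /and3P [_ + _] /and3P [_ + _].
  rewrite /I1 !in_itv /= => /andP [a1 a2] /andP [b1 b2].
  have h1 : (k%:R : R) < k'.+1%:R.
    by rewrite -(ltr_pM2r Ni); exact: le_lt_trans a1 b2.
  have h2 : (k'%:R : R) < k.+1%:R.
    by rewrite -(ltr_pM2r Ni); exact: le_lt_trans b1 a2.
  rewrite ltr_nat in h1; rewrite ltr_nat in h2.
  by apply/eqP; rewrite eqn_leq -ltnS h1 /= -ltnS h2.
rewrite big1 // => k _.
case ck: (c k) => //.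
move: (ck) => /and3P [h _ _]; move: (cu _ ck) => h'.
by rewrite h h' in E.
Qed.

End P8.
Section P9.
Context {R : realType} {T : countType} {d : measure_display}
  {Omega : measurableType d} (P : probability Omega R) (p q : T -> R) (m : nat)
  (X : nat -> Omega -> T) (U : nat -> Omega -> R)
  (hM : rank_model p q m P X U) (lt : rel T) (F : seq T) (n : nat).

Lemma good_gA j : (j < m)%N -> good (gA m X U lt F j).
Proof.
move=> jm; apply: good_sum => a; apply: good_sum => b; apply: good_if.
by apply: good_indic; apply: (rect_meas P p q m X U hM).
Qed.

Lemma I_meas k : measurable ([set` I0 n k] : set R) /\ measurable ([set` I1 n k] : set R).
Proof. by split; exact: measurable_itv. Qed.

Lemma good_gB j : (j < m)%N -> good (gB m X U F n j).
Proof.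
move=> jm; apply: good_sum => a; apply: good_sum => k.
by apply: good_indic; apply: (rect_meas P p q m X U hM); apply: measurable_itv.
Qed.

Lemma Ef_gA j : (j < m)%N -> Ef P (gA m X U lt F j) =
  (\sum_(a <- F) \sum_(b <- F) (if lt a b then p a * q b else 0))%:E.
Proof.
move=> jm; rewrite /gA Ef_sum; last first.
  move=> a; apply: good_sum => b; apply: good_if.
  by apply: good_indic; apply: (rect_meas P p q m X U hM).
rewrite -sumEFin; apply: eq_bigr => a _.
rewrite Ef_sum; last first.
  move=> b; apply: good_if.
  by apply: good_indic; apply: (rect_meas P p q m X U hM).
rewrite -sumEFin; apply: eq_bigr => b _.
rewrite Ef_if; case: ifP => // _.
rewrite Ef_indic; last by apply: (rect_meas P p q m X U hM).
rewrite (rect_prob P p q m X U hM) // (PX0 P p q m X U hM) (PXj P p q m X U hM) //.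
by rewrite !PUT !mule1 -EFinM mulrC.
Qed.

Lemma Ef_gB j : (j < m)%N -> (0 < n)%N -> Ef P (gB m X U F n j) =
  (\sum_(a <- F) p a * q a * (1/2 - 1/(2 * n%:R)))%:E.
Proof.
move=> jm n0.
have N0 : (0 : R) < n%:R by rewrite ltr0n.
rewrite /gB Ef_sum; last first.
  move=> a; apply: good_sum => k.
  by apply: good_indic; apply: (rect_meas P p q m X U hM); apply: measurable_itv.
rewrite -sumEFin; apply: eq_bigr => a _.
rewrite Ef_sum; last first.
  by move=> k; apply: good_indic; apply: (rect_meas P p q m X U hM); apply: measurable_itv.
rewrite -(tie_sum n n0) mulr_sumr -sumEFin; apply: eq_bigr => k _.
rewrite Ef_indic; last by apply: (rect_meas P p q m X U hM); apply: measurable_itv.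
have kn : (k < n)%N := ltn_ord k.
have h0 : (0 : R) <= k%:R / n%:R by rewrite divr_ge0 // ler0n.
have h1 : (k%:R : R) / n%:R < k.+1%:R / n%:R by rewrite ltr_pM2r ?invr_gt0 // ltr_nat.
have h2 : (k.+1%:R : R) / n%:R <= 1 by rewrite ler_pdivrMr // mul1r ler_nat.
rewrite (rect_prob P p q m X U hM) //; try by apply: measurable_itv.
rewrite (PX0 P p q m X U hM) (PXj P p q m X U hM) //.
have h3 : (0 : R) <= k.+1%:R / n%:R := le_trans h0 (ltW h1).
rewrite /I0 /I1 (PU_cc P p q m X U hM 0 _ (leq0n m) h3 h2).
rewrite (PU_co P p q m X U hM j.+1 _ _ jm h0 h1 h2).
rewrite -!EFinM; congr (_%:E); ring.
Qed.

End P9.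
Section P10.
Context {R : realType} {T : countType} {d : measure_display}
  {Omega : measurableType d} (P : probability Omega R) (p q : T -> R) (m : nat)
  (X : nat -> Omega -> T) (U : nat -> Omega -> R)
  (hM : rank_model p q m P X U) (lt : rel T) (hlt : strict_total_order lt).

Definition ftot w : R := (rank_stat lt m X U w)%:R.

Lemma bool_indic (g : Omega -> bool) w : ((g w : nat)%:R : R) = \1_[set w | g w] w.
Proof.
rewrite indicE; case: (boolP (g w)) => h.
  by rewrite mem_set.
by rewrite memNset //; apply/negP.
Qed.

Lemma EL_meas (j : nat) : (j < m)%N -> measurable [set w | lt (X j.+1 w) (X 0%N w)].
Proof.
move=> jm.
have -> : [set w | lt (X j.+1 w) (X 0%N w)] =
    \bigcup_(t : T) (X j.+1 @^-1` [set t] `&` X 0%N @^-1` [set y | lt t y]).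
  apply/seteqP; split => w /=.
    by move=> h; exists (X j.+1 w).
  by move=> [t _ [/= -> h]].
apply: countable_bigcupT_measurable; first exact: countableP.
by move=> t; apply: measurableI; apply: (mXpre P p q m X U hM).
Qed.

Lemma ET_meas (j : nat) : (j < m)%N ->
  measurable [set w | (X j.+1 w == X 0%N w) && (U j.+1 w < U 0%N w)].
Proof.
move=> jm.
have -> : [set w | (X j.+1 w == X 0%N w) && (U j.+1 w < U 0%N w)] =
    (\bigcup_(t : T) (X j.+1 @^-1` [set t] `&` X 0%N @^-1` [set t])) `&`
    ([set: Omega] `&` (fun w => U j.+1 w < U 0%N w) @^-1` [set true]).
  apply/seteqP; split => w /=.
    move=> /andP [/eqP e h]; split; last by [].
    by exists (X 0%N w).
  move=> [[t _ [/= h1 h2]] [_ /= h]]; apply/andP; split => //.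
  by apply/eqP; rewrite h1 h2.
apply: measurableI.
  apply: countable_bigcupT_measurable; first exact: countableP.
  by move=> t; apply: measurableI; apply: (mXpre P p q m X U hM).
case: hM => _ [mU _].
by apply: (measurable_fun_ltr (mU j.+1 jm) (mU 0%N (leq0n m))).
Qed.

Lemma ftotE : ftot = fun w => \sum_(j < m)
   (\1_[set w | lt (X j.+1 w) (X 0%N w)] w +
    \1_[set w | (X j.+1 w == X 0%N w) && (U j.+1 w < U 0%N w)] w).
Proof.
apply/funext => w; rewrite /ftot /rank_stat natr_sum; apply: eq_bigr => j _.
by rewrite natrD -!bool_indic.
Qed.

Lemma good_ftot : good ftot.
Proof.
rewrite ftotE; apply: good_sum => j; apply: good_add; apply: good_indic.
  exact: EL_meas.
exact: ET_meas.
Qed.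

Lemma rank_le w : (rank_stat lt m X U w <= m)%N.
Proof.
rewrite /rank_stat -[X in (_ <= X)%N]card_ord -sum1_card.
apply: leq_sum => j _.
case: hlt => irr _.
case e: (lt (X j.+1 w) (X 0%N w)) => /=.
  case: eqP => //= h.
  by rewrite h irr in e.
by case: (_ && _).
Qed.

Lemma Ef_ftot : rank_uniform lt m P X U -> Ef P ftot = (m%:R / 2)%:E.
Proof.
move=> hu.
pose Rk (k : nat) := [set w | rank_stat lt m X U w = k].
have mRk : forall k, measurable (Rk k).
  move=> k; case: good_ftot => mf _.
  have := mf measurableT [set k%:R] (measurable_set1 _).
  rewrite setTI.
  have -> : ftot @^-1` [set k%:R] = Rk k.
    apply/seteqP; split => w /=; rewrite /ftot.
      by move/eqP; rewrite eqr_nat => /eqP.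
    by move=> ->.
  by [].
have e : ftot = fun w => \sum_(k < m.+1) k%:R * \1_(Rk k) w.
  apply/funext => w.
  have rw : (rank_stat lt m X U w < m.+1)%N by rewrite ltnS rank_le.
  rewrite (bigD1 (Ordinal rw)) //= indicE mem_set // mulr1 big1 ?addr0 //.
  move=> k kr; rewrite indicE memNset ?mulr0 // /Rk /= => h.
  by move: kr; rewrite -(inj_eq val_inj) /= h eqxx.
rewrite e Ef_sum; last first.
  move=> k; split.
    apply: measurable_funM; first exact: measurable_cst.
    exact: measurable_indic.
  by move=> w; rewrite indicE mulr_ge0.
have step : forall k : 'I_m.+1,
    Ef P (fun w => k%:R * \1_(Rk k) w) = (k%:R / m.+1%:R)%:E.
  move=> k; rewrite Ef_scale_indic // ?ler0n // hu; last by rewrite -ltnS.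
  by rewrite -EFinM.
rewrite (eq_bigr _ (fun k _ => step k)) sumEFin; congr (_%:E).
rewrite -mulr_suml tri -natr1.
have M0 : (m%:R + 1 : R) != 0 by rewrite natr1 pnatr_eq0.
move: M0; set M := (m%:R : R) => M0.
by field.
Qed.

End P10.
Theorem theorem3p6 (R : realType) (T : countType) (p q : T -> R) :
  is_prob_distr p -> is_prob_distr q -> p <> q ->
  exists lt : rel T, strict_total_order lt /\
    (forall (m : nat), (1 <= m)%N ->
     forall (d : measure_display) (Omega : measurableType d)
            (P : probability Omega R)
            (X : nat -> Omega -> T) (U : nat -> Omega -> R),
       rank_model p q m P X U -> ~ rank_uniform lt m P X U).
Proof.
move=> hp hq npq.
have [F [n [uF [n0 hV]]]] := choose_Fn p q hp hq npq.
exists (ltS (fun x => p x < q x)); split; first exact: ltS_sto.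
move=> m m1 d Omega P X U hM hu.
have hlt := ltS_sto (fun x => p x < q x).
set lt := ltS (fun x => p x < q x) in hV hu hlt *.
pose g w := \sum_(j < m) (gA m X U lt F j w + gB m X U F n j w).
have gg : good g.
  apply: good_sum => j; apply: good_add.
    exact: (good_gA P p q m X U hM lt F j (ltn_ord j)).
  exact: (good_gB P p q m X U hM F n j (ltn_ord j)).
have gle : forall w, g w <= ftot m X U lt w.
  move=> w; rewrite ftotE; apply: ler_sum => j _; apply: lerD.
    rewrite -bool_indic; exact: (gA_le m X U lt F j w (ltn_ord j) uF).
  rewrite -(bool_indic (fun w => (X j.+1 w == X 0%N w) && (U j.+1 w < U 0%N w))).
  exact: (gB_le m X U F n j w (ltn_ord j) uF n0).
have hEf := Ef_le P _ _ gg (good_ftot P p q m X U hM lt) gle.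
rewrite (Ef_ftot P p q m X U hM lt hlt hu) in hEf.
move: hEf; rewrite /g Ef_sum; last first.
  move=> j; apply: good_add.
    exact: (good_gA P p q m X U hM lt F j (ltn_ord j)).
  exact: (good_gB P p q m X U hM F n j (ltn_ord j)).
have step : forall j : 'I_m,
   Ef P (fun w => gA m X U lt F j w + gB m X U F n j w) =
   ((\sum_(a <- F) \sum_(b <- F) (if lt a b then p a * q b else 0))
     + (\sum_(a <- F) p a * q a) * (1/2 - 1/(2 * n%:R)))%:E.
  move=> j; rewrite Ef_add.
  - rewrite (Ef_gA P p q m X U hM lt F j (ltn_ord j)).
    rewrite (Ef_gB P p q m X U hM F n j (ltn_ord j) n0).
    by rewrite mulr_suml -EFinD.
  - exact: (good_gA P p q m X U hM lt F j (ltn_ord j)).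
  - exact: (good_gB P p q m X U hM F n j (ltn_ord j)).
rewrite (eq_bigr _ (fun j _ => step j)) sumEFin sumr_const card_ord lee_fin.
set V := (X in X *+ m).
move=> h.
have mpos : (0 : R) < m%:R by rewrite ltr0n.
have : m%:R * V <= m%:R / 2 by rewrite mulr_natl.
move: hV; rewrite -/V => hV h2.
have : m%:R / 2 < m%:R * V.
  clear -hV mpos; nra.
by rewrite ltNge h2.
Qed.
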